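(* Let $\mathcal{P}_1,\dots,\mathcal{P}_k$ be finite posets such that $\mathcal{C}(\mathcal{P}_j)$ has $q_j$ extremal rays, ordered so that $q_1\le\cdots\le q_k$. Then every tensor in $\otimes_{j=1}^k\mathcal{C}(\mathcal{P}_j)$ has ND rank at most $\prod_{j=1}^{k-1}q_j$; that is, the maximum ND rank in $\otimes_{j=1}^k\mathcal{C}(\mathcal{P}_j)$ is at most $\prod_{j=1}^{k-1}q_j$.
   Context: For a finite poset $\mathcal{Q}$, the order cone $\mathcal{C}(\mathcal{Q})$ is the set of functions $\mathbf{f}$ on $\mathcal{Q}$ with $f_x\ge0$ for all $x$ and $f_x\le f_y$ whenever $x\preceq y$; it is a polyhedral cone, and an extremal ray is a one-dimensional face. $\otimes_{j}\mathcal{C}(\mathcal{P}_j)$ is the set of tensors $\sum_{i=1}^r\otimes_{j=1}^k\mathbf{v}^{(ij)}$ (finite $r$) with $\mathbf{v}^{(ij)}\in\mathcal{C}(\mathcal{P}_j)$. The ND rank of such a tensor is the minimal such $r$; the maximum ND rank is the supremum of the finite ND ranks attained. *)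

(* Defs.v *)
From HB Require Import structures.
From mathcomp Require Import all_boot all_order all_algebra.
From mathcomp Require Import reals.
Set Implicit Arguments. Unset Strict Implicit. Unset Printing Implicit Defensive.
Import Order.TTheory GRing.Theory Num.Theory.
Local Open Scope ring_scope.

Definition order_cone (R : realType) (d : Order.disp_t) (P : finPOrderType d)
  (f : P -> R) : Prop :=
  (forall x, 0 <= f x) /\ (forall x y : P, (x <= y)%O -> f x <= f y).

Definition on_ray (R : realType) (T : Type) (f g : T -> R) : Prop :=
  exists t : R, 0 <= t /\ forall x, g x = t * f x.

Definition same_ray (R : realType) (T : Type) (f g : T -> R) : Prop :=
  exists t : R, 0 < t /\ forall x, f x = t * g x.

(* f (nonzero, in the cone) generates an extremal ray of C(P):
   the ray {t f | t >= 0} is a face of C(P). *)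
Definition extremal_ray (R : realType) (d : Order.disp_t) (P : finPOrderType d)
  (f : P -> R) : Prop :=
  [/\ order_cone f, exists x, f x != 0 &
      forall a b : P -> R, order_cone a -> order_cone b ->
        on_ray f (fun x => a x + b x) -> on_ray f a /\ on_ray f b].

Definition num_extremal_rays (R : realType) (d : Order.disp_t) (P : finPOrderType d)
  (q : nat) : Prop :=
  exists g : 'I_q -> P -> R,
    [/\ forall i, extremal_ray (g i),
        forall i j, i != j -> ~ same_ray (g i) (g j) &
        forall f : P -> R, extremal_ray f -> exists i, same_ray f (g i)].

Definition nd_decomp (R : realType) (k : nat) (dd : 'I_k -> Order.disp_t)
  (P : forall j : 'I_k, finPOrderType (dd j))
  (T : (forall j : 'I_k, P j) -> R) (r : nat) : Prop :=
  exists v : 'I_r -> forall j : 'I_k, P j -> R,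
    (forall i j, order_cone (v i j)) /\
    forall x : (forall j : 'I_k, P j), T x = \sum_(i < r) \prod_(j < k) v i j (x j).

Definition in_tensor_cone (R : realType) (k : nat) (dd : 'I_k -> Order.disp_t)
  (P : forall j : 'I_k, finPOrderType (dd j)) (T : (forall j : 'I_k, P j) -> R) : Prop :=
  exists r, nd_decomp T r.

Definition nd_rank_le (R : realType) (k : nat) (dd : 'I_k -> Order.disp_t)
  (P : forall j : 'I_k, finPOrderType (dd j)) (T : (forall j : 'I_k, P j) -> R)
  (m : nat) : Prop :=
  exists2 r, (r <= m)%N & nd_decomp T r.

(* Main.v *)
Require Import Defs.
From HB Require Import structures.
From mathcomp Require Import all_boot all_order all_algebra.
From mathcomp Require Import reals.
From mathcomp Require Import lra ring zify.
From Stdlib Require Import Classical.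
Set Implicit Arguments. Unset Strict Implicit. Unset Printing Implicit Defensive.
Import Order.TTheory GRing.Theory Num.Theory.
Local Open Scope ring_scope.

Section Rep.
Variables (R : realType) (d : Order.disp_t) (P : finPOrderType d) (q : nat)
  (g : 'I_q -> P -> R).
Hypothesis hext : forall f, extremal_ray f -> exists i, same_ray f (g i).

Definition rep (f : P -> R) := exists c : 'I_q -> R,
  (forall l, 0 <= c l) /\ forall y, f y = \sum_l c l * g l y.

Lemma rep0 f : (forall x, f x = 0) -> rep f.
Proof.
move=> f0; exists (fun _ => 0); split=> // y.
by rewrite f0 big1 // => l _; rewrite mul0r.
Qed.

Lemma repD f1 f2 f : rep f1 -> rep f2 -> (forall x, f x = f1 x + f2 x) -> rep f.
Proof.
move=> [c1 [c10 e1]] [c2 [c20 e2]] ef; exists (fun l => c1 l + c2 l); split.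
  by move=> l; rewrite addr_ge0.
by move=> y; rewrite ef e1 e2 -big_split; apply: eq_bigr => l _; rewrite mulrDl.
Qed.

Lemma rep_ext f : extremal_ray f -> rep f.
Proof.
move=> /hext [i [t [t0 ht]]].
exists (fun l => if l == i then t else 0); split.
  by move=> l; case: ifP => // _; exact: ltW.
move=> y; rewrite ht (bigD1 i) //= eqxx big1 ?addr0 // => l /negbTE ->.
by rewrite mul0r.
Qed.

Lemma card_lt (A B : pred P) x :
  {subset A <= B} -> x \in B -> x \notin A -> (#|A| < #|B|)%N.
Proof.
move=> sAB xB xA; apply: proper_card; apply/properP; split.
  exact/subsetP.
by exists x.
Qed.

Lemma ray_of (f h : P -> R) : order_cone f -> (forall x, 0 <= h x) ->
  (forall x, f x = 0 -> h x = 0) ->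
  (forall x y, f x != 0 -> f y != 0 -> f x = f y) ->
  (forall x y, f x != 0 -> f y != 0 -> h x = h y) -> on_ray f h.
Proof.
move=> [f0 _] h0 hz fc hc.
case: (pickP (fun x => f x != 0)) => [x0 /= fx0 | fz].
  exists (h x0 / f x0); split; first by rewrite divr_ge0.
  move=> x; have [/eqP fx|fx] := boolP (f x == 0).
    by rewrite fx mulr0 hz.
  have -> : f x = f x0 by apply: fc.
  by rewrite divfK // (hc x x0).
exists 0; split => // x; rewrite mul0r hz //.
by apply/eqP; move: (fz x) => /= /negbFE.
Qed.


Definition supp (f : P -> R) : pred P := fun x => f x != 0.

Lemma supp0 (f : P -> R) : (#|supp f| <= 0)%N -> forall x, f x = 0.
Proof.
rewrite leqn0 => /eqP /card0_eq H x; apply/eqP; move: (H x).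
by rewrite unfold_in /supp /= => /negbFE.
Qed.

Lemma B1 n f : (#|supp f| <= n)%N -> order_cone f ->
  (forall x y, f x != 0 -> f y != 0 -> f x = f y) -> rep f.
Proof.
elim: n f => [|n IH] f hn hc hconst; first by apply: rep0; exact: supp0.
have pos x : f x != 0 -> 0 < f x by rewrite lt_def => ->; exact: hc.1.
case: (pickP (fun x => f x != 0)) => [x0 /= fx0 | fz]; last first.
  by apply: rep0 => x; apply/eqP; move: (fz x) => /= /negbFE.
case: (classic (exists x1 x2 a b, f x1 != 0 /\ f x2 != 0 /\ order_cone a /\
   order_cone b /\ on_ray f (fun x => a x + b x) /\ a x1 != a x2)).
  move=> [x1 [x2 [a [b [h1 [h2 [ca [cb [[t [t0 ht]] ne]]]]]]]]].
  have key x y : f x != 0 -> (x <= y)%O -> f y != 0 /\ a x = a y.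
    move=> fx xy; have fy : f y != 0.
      apply: lt0r_neq0; apply: (lt_le_trans (pos x fx)); exact: hc.2.
    split=> //; have := ca.2 x y xy; have := cb.2 x y xy.
    have := ht x; have := ht y; rewrite (hconst x y fx fy) => e1 e2 l1 l2.
    lra.
  pose f1 x := if (f x != 0) && (a x == a x1) then f x else 0.
  pose f2 x := if (f x != 0) && (a x != a x1) then f x else 0.
  have c1 : order_cone f1.
    split=> [x|x y xy]; rewrite /f1.
      by case: ifP => // _; exact: hc.1.
    case: ifP => [/andP[fx /eqP ax]|_]; last by case: ifP => // _; exact: hc.1.
    have [fy ay] := key x y fx xy.
    by rewrite fy -ay ax eqxx /=; exact: hc.2.
  have c2 : order_cone f2.
    split=> [x|x y xy]; rewrite /f2.
      by case: ifP => // _; exact: hc.1.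
    case: ifP => [/andP[fx ax]|_]; last by case: ifP => // _; exact: hc.1.
    have [fy ay] := key x y fx xy.
    by rewrite fy -ay ax /=; exact: hc.2.
  apply: (@repD f1 f2).
  - apply: (IH f1 _ c1).
      rewrite -ltnS; apply: leq_trans hn; apply: (@card_lt _ _ x2).
      + move=> x; rewrite !unfold_in /supp /f1; case: ifP => [/andP[]//|_].
        by rewrite eqxx.
      + by rewrite unfold_in.
      + have ne2 : (a x2 == a x1) = false by rewrite eq_sym (negbTE ne).
        by rewrite unfold_in /supp /f1 h2 /= ne2 eqxx.
    move=> x y; rewrite /f1; case: ifP => [/andP[fx _]|_]; last by rewrite eqxx.
    case: ifP => [/andP[fy _]|_]; last by rewrite eqxx.
    by move=> _ _; apply: hconst.
  - apply: (IH f2 _ c2).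
      rewrite -ltnS; apply: leq_trans hn; apply: (@card_lt _ _ x1).
      + move=> x; rewrite !unfold_in /supp /f2; case: ifP => [/andP[]//|_].
        by rewrite eqxx.
      + by rewrite unfold_in.
      + by rewrite unfold_in /supp /f2 h1 /= eqxx /= eqxx.
    move=> x y; rewrite /f2; case: ifP => [/andP[fx _]|_]; last by rewrite eqxx.
    case: ifP => [/andP[fy _]|_]; last by rewrite eqxx.
    by move=> _ _; apply: hconst.
  - move=> x; rewrite /f1 /f2; case: (f x =P 0) => [->|/eqP fx] /=.
      by rewrite addr0.
    by case: (a x =P a x1) => _ /=; rewrite ?addr0 ?add0r.
move=> Hno; apply: rep_ext; split=> //; first by exists x0.
move=> a b ca cb [t [t0 ht]].
have ac x y : f x != 0 -> f y != 0 -> a x = a y.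
  move=> fx fy; apply/eqP; apply/negPn/negP => ne; apply: Hno.
  by exists x, y, a, b; do !split => //; exists t.
have z x : f x = 0 -> a x = 0 /\ b x = 0.
  move=> fx; have := ht x; rewrite fx mulr0.
  have := ca.1 x; have := cb.1 x => l1 l2 e; split; lra.
split; apply: ray_of => //.
- exact: ca.1.
- by move=> x /z [].
- exact: cb.1.
- by move=> x /z [].
- move=> x y fx fy; have := ht x; have := ht y.
  rewrite (hconst x y fx fy) (ac x y fx fy) => e1 e2; lra.
Qed.

Lemma B2 n f : (#|supp f| <= n)%N -> order_cone f -> rep f.
Proof.
elim: n f => [|n IH] f hn hc; first by apply: rep0; exact: supp0.
have pos x : f x != 0 -> 0 < f x by rewrite lt_def => ->; exact: hc.1.
case: (pickP (fun x => f x != 0)) => [x0 /= fx0 | fz]; last first.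
  by apply: rep0 => x; apply/eqP; move: (fz x) => /= /negbFE.
case: (@arg_minP _ R _ x0 (fun x => f x != 0) f fx0) => m /= fm minm.
have nz x y : f x != 0 -> (x <= y)%O -> f y != 0.
  move=> fx xy; apply: lt0r_neq0; apply: (lt_le_trans (pos x fx)); exact: hc.2.
pose f1 x := if f x != 0 then f m else 0.
pose f2 x := f x - f1 x.
apply: (@repD f1 f2).
- apply: (@B1 #|supp f1|) => //.
    split=> [x|x y xy]; rewrite /f1.
      by case: ifP => // _; exact: hc.1.
    case: ifP => [fx|_]; first by rewrite (nz x y fx xy).
    by case: ifP => // _; exact: hc.1.
  move=> x y; rewrite /f1; case: ifP => [_|_]; last by rewrite eqxx.
  by case: ifP => [_|_] //; rewrite eqxx.
- have c2 : order_cone f2.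
    have n2 x : 0 <= f2 x.
      rewrite /f2 /f1; case: ifP => [fx|_]; last by rewrite subr0; exact: hc.1.
      by rewrite subr_ge0; apply: minm.
    split=> [x|x y xy] //; rewrite /f2 /f1.
    case: ifP => [fx|/negbFE/eqP fx]; last by rewrite fx subr0 -/(f1 y) -/(f2 y).
    rewrite (nz x y fx xy) lerD2r; exact: hc.2.
  apply: (IH f2 _ c2).
  rewrite -ltnS; apply: leq_trans hn; apply: (@card_lt _ _ m).
  + move=> x; rewrite !unfold_in /supp /f2 /f1; case: ifP => [//|/negbFE/eqP ->].
    by rewrite subr0 eqxx.
  + by rewrite unfold_in.
  + by rewrite unfold_in /supp /f2 /f1 fm subrr eqxx.
- by move=> x; rewrite /f2 subrKC.
Qed.

Lemma cone_rep f : order_cone f -> rep f.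
Proof. exact: (@B2 #|supp f|). Qed.

End Rep.
Lemma cone_sum (R : realType) d (P : finPOrderType d) (I : Type) (r : seq I)
  (c : I -> R) (h : I -> P -> R) :
  (forall i, 0 <= c i) -> (forall i, order_cone (h i)) ->
  order_cone (fun y => \sum_(i <- r) c i * h i y).
Proof.
move=> c0 hc; split=> [y|x y xy].
  by apply: sumr_ge0 => i _; apply: mulr_ge0 => //; exact: (hc i).1.
by apply: ler_sum => i _; apply: ler_wpM2l => //; exact: (hc i).2.
Qed.

Lemma card_lt_ord m n : (n <= m)%N -> #|[pred l : 'I_m | (l < n)%N]| = n.
Proof.
move=> nm; rewrite -sum1_card.
rewrite -(big_ord_widen _ (fun _ => 1%N) nm).
by rewrite sum1_card card_ord.
Qed.

Theorem lemma6 (R : realType) (k : nat) (dd : 'I_k -> Order.disp_t)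
  (P : forall j : 'I_k, finPOrderType (dd j)) (q : 'I_k -> nat)
  (hk : (0 < k)%N)
  (hq : forall j, num_extremal_rays R (P j) (q j))
  (hsort : forall i j : 'I_k, (i <= j)%N -> (q i <= q j)%N) :
  forall T : (forall j : 'I_k, P j) -> R,
    in_tensor_cone T ->
    nd_rank_le T (\prod_(j < k | (j.+1 < k)%N) q j)%N.
Proof.
move=> T [r [v [hv hT]]].
have [g hg] := fin_all_exists hq.
have hc i j : exists c : 'I_(q j) -> R,
    (forall l, 0 <= c l) /\ forall y, v i j y = \sum_l c l * g j l y.
  by case: (hg j) => _ _ hext; exact: (cone_rep hext (hv i j)).
have [c hc'] := fin_all_exists (fun i => fin_all_exists (hc i)).
pose gN j (l : nat) : P j -> R := oapp (g j) (fun _ => 0) (insub l).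
pose cN i j (l : nat) : R := oapp (c i j) 0 (insub l).
pose M := (\max_j q j).+1.
have qM j : (q j < M)%N by rewrite ltnS leq_bigmax.
have M0 : (0 < M)%N by [].
pose Q (j : 'I_k) : pred 'I_M :=
  fun l => if (j.+1 < k)%N then (l < q j)%N else (val l == 0)%N.
have jlP : (k.-1 < k)%N by rewrite ltn_predL.
pose jl := Ordinal jlP.
have lastE (j : 'I_k) : (~~ (j.+1 < k)%N) = (j == jl).
  by rewrite -val_eqE /=; case: j => j /= jk; apply/idP/eqP; lia.
have hjl : (jl.+1 < k)%N = false by apply/negbTE; rewrite lastE.
have prodS (H : 'I_k -> R) : \prod_(j : 'I_k) H j = (\prod_(j : 'I_k | (j.+1 < k)%N) H j) * H jl.
  rewrite (bigID (fun j : 'I_k => (j.+1 < k)%N)) /=; congr (_ * _).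
  by apply: big_pred1 => j; rewrite /= lastE.
pose w (f : {ffun 'I_k -> 'I_M}) j (y : P j) : R :=
  if (j.+1 < k)%N then gN j (f j) y
  else \sum_(i : 'I_r) (\prod_(j' : 'I_k | (j'.+1 < k)%N) cN i j' (f j')) * v i j y.
exists #|family Q|.
  apply: eq_leq; rewrite card_family foldrE big_map big_enum /=.
  rewrite [RHS]big_mkcond; apply: eq_bigr => j _; case: (boolP (j.+1 < k)%N) => hj.
    rewrite -(card_lt_ord (ltnW (qM j))); apply: eq_card => l.
    by rewrite !unfold_in /Q /= hj.
  rewrite -(card1 (Ordinal M0)); apply: eq_card => l.
  by rewrite !unfold_in /Q /= (negbTE hj) -val_eqE.
exists (fun s => w (enum_val s)); split.
  move=> s j; rewrite /w; case: (boolP (j.+1 < k)%N) => _.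
    rewrite /gN; case: insub => [l|] /=.
      by have [/(_ l) [] ] := hg j.
    by split=> // *; exact: lexx.
  apply: cone_sum; last by move=> i; exact: hv.
  move=> i; apply: prodr_ge0 => j' _; rewrite /cN; case: insub => [l|] //=.
  exact: (proj1 (hc' i j')).
move=> x; rewrite hT.
pose F (i : 'I_r) (j : 'I_k) (l : 'I_M) := if (j.+1 < k)%N then cN i j l * gN j l (x j) else v i j (x j).
have e1 i : \prod_(j : 'I_k) v i j (x j) = \prod_(j : 'I_k) \sum_(l : 'I_M | Q j l) F i j l.
  apply: eq_bigr => j _; rewrite /Q /F; case: (boolP (j.+1 < k)%N) => hj.
    rewrite (proj2 (hc' i j)).
    transitivity (\sum_(l < q j) cN i j l * gN j l (x j)).
      by apply: eq_bigr => l _; rewrite /cN /gN valK.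
    by rewrite (big_ord_widen M (fun l => cN i j l * gN j l (x j)) (ltnW (qM j))).
  rewrite (big_pred1 (Ordinal M0)) // => l.
rewrite (eq_bigr _ (fun i _ => e1 i)).
under eq_bigr do rewrite bigA_distr_big_dep.
rewrite exchange_big /= big_enum_val.
apply: eq_bigr => s _; set f := enum_val s.
rewrite prodS /w hjl.
rewrite (eq_bigr (fun j => gN j (f j) (x j))); last by move=> j ->.
transitivity (\sum_(i < r) (\prod_(j < k | (j.+1 < k)%N) cN i j (f j)) *
   (\prod_(j < k | (j.+1 < k)%N) gN j (f j) (x j)) * v i jl (x jl)).
  apply: eq_bigr => i _; rewrite prodS /F hjl -big_split /=; congr (_ * _).
  by apply: eq_bigr => j ->.
rewrite mulr_sumr; apply: eq_bigr => i _; ring.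
Qed.
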